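(* Let $P,Q$ be finite posets and $R$ an indecomposable commutative unital ring. Then every $R$-linear algebra isomorphism $\Phi:I^3(P,R)\to I^3(Q,R)$ is of the form $\widehat\varphi$ for some poset isomorphism $\varphi:P\to Q$, where $\widehat\varphi$ is the $R$-linear map determined by $\widehat\varphi(e_{xyz})=e_{\varphi(x)\varphi(y)\varphi(z)}$ for all $x\le y\le z$ in $P$.
   Context: A commutative ring $R$ is indecomposable if its only idempotents are $0$ and $1$. For a finite poset $P$, let $P^3_\le=\{(x,y,z)\in P^3: x\le y\le z\}$. The third partial flag incidence algebra $I^3(P,R)$ is the $R$-module of all functions $f:P^3_\le\to R$ (pointwise operations) with the (non-associative) multiplication $(fg)(x_1,x_2,x_3)=\sum f(x_1,y_1,y_2)\,g(y_1,y_2,x_3)$, the sum over all $y_1,y_2$ with $x_1\le y_1\le x_2\le y_2\le x_3$. For $x\le y\le z$ in $P$, $e_{xyz}\in I^3(P,R)$ is the function taking value $1$ at $(x,y,z)$ and $0$ elsewhere; these form a basis of $I^3(P,R)$. *)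

(* Defs.v *)
From HB Require Import structures.
From mathcomp Require Import all_boot all_order all_algebra.
Set Implicit Arguments. Unset Strict Implicit. Unset Printing Implicit Defensive.
Import Order.TTheory GRing.Theory.
Local Open Scope order_scope.

Definition is_chain3 (d : Order.disp_t) (P : finPOrderType d) (t : P * P * P) : bool :=
  (t.1.1 <= t.1.2) && (t.1.2 <= t.2).

Notation chain3 P := {t : P * P * P | is_chain3 t}.

(* The third partial flag incidence algebra, as an R-module:
   all functions P^3_<= -> R. *)
Notation I3 P R := {ffun chain3 P -> R^o}.

Local Open Scope ring_scope.

(* value of f at (x,y,z), 0 if (x,y,z) is not a chain (only used on chains) *)
Definition at3 (d : Order.disp_t) (P : finPOrderType d) (R : comNzRingType)
  (f : I3 P R) (x y z : P) : R :=
  if @insub _ (@is_chain3 d P) (chain3 P) (x, y, z) is Some t then f t else 0.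

Definition mul3 (d : Order.disp_t) (P : finPOrderType d) (R : comNzRingType)
  (f g : I3 P R) : I3 P R :=
  [ffun t : chain3 P =>
     let x1 := (val t).1.1 in let x2 := (val t).1.2 in let x3 := (val t).2 in
     \sum_(y1 : P) \sum_(y2 : P | [&& (x1 <= y1)%O, (y1 <= x2)%O,
                                     (x2 <= y2)%O & (y2 <= x3)%O])
        at3 f x1 y1 y2 * at3 g y1 y2 x3].

Definition e3 (d : Order.disp_t) (P : finPOrderType d) (R : comNzRingType)
  (x y z : P) : I3 P R :=
  [ffun t : chain3 P => ((val t == (x, y, z)) : nat)%:R].

Definition indecomposable (R : comNzRingType) : Prop :=
  forall r : R, r * r = r -> r = 0 \/ r = 1.

Definition poset_iso (dP dQ : Order.disp_t) (P : finPOrderType dP)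
  (Q : finPOrderType dQ) (phi : P -> Q) : Prop :=
  bijective phi /\ forall x y : P, (phi x <= phi y)%O = (x <= y)%O.

(* Main.v *)
Require Import Defs.
From HB Require Import structures.
From mathcomp Require Import all_boot all_order all_algebra.
Import Order.TTheory GRing.Theory.
Local Open Scope ring_scope.


Section Sums.
Variable R : comNzRingType.

Lemma sum_one (T : finType) (C : pred T) (F : T -> R) t0 :
  (forall t, C t -> t != t0 -> F t = 0) ->
  \sum_(t | C t) F t = (C t0)%:R * F t0.
Proof.
move=> H; rewrite big_mkcond (bigD1 t0) //= big1 ?addr0.
  by case: (C t0); rewrite ?mul1r ?mul0r.
by move=> t nt; case Ct: (C t) => //; apply: H.
Qed.

Lemma sum_two (T : finType) (C : pred T) (F : T -> R) t1 t2 :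
  t1 != t2 ->
  (forall t, C t -> t != t1 -> t != t2 -> F t = 0) ->
  \sum_(t | C t) F t = (C t1)%:R * F t1 + (C t2)%:R * F t2.
Proof.
move=> n12 H; rewrite big_mkcond (bigD1 t1) //= (bigD1 t2) /=; last by rewrite eq_sym.
rewrite big1 ?addr0.
  by case: (C t1); case: (C t2); rewrite ?mul1r ?mul0r ?addrA.
by move=> t /andP [n1 n2]; case Ct: (C t) => //; apply: H.
Qed.
End Sums.

Section Basic.
Variables (d : Order.disp_t) (P : finPOrderType d) (R : comNzRingType).
Local Notation A := (I3 P R).
Implicit Types (f g v w : A) (x y z a b c : P).

Lemma at3_chain f (t : chain3 P) : at3 f (val t).1.1 (val t).1.2 (val t).2 = f t.
Proof.
rewrite /at3; case: insubP => [t' _ Ht'|].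
  by congr (f _); apply: val_inj; rewrite Ht'; case: (val t) => [[]].
by case: t => [[[x y] z] Ht] /=; rewrite Ht.
Qed.

Lemma at3_nchain f x y z : ~~ ((x <= y)%O && (y <= z)%O) -> at3 f x y z = 0.
Proof. by move=> H; rewrite /at3; case: insubP => // t; rewrite /is_chain3 /= (negbTE H). Qed.

Lemma eq_I3 f g :
  (forall x y z, (x <= y)%O -> (y <= z)%O -> at3 f x y z = at3 g x y z) -> f = g.
Proof.
move=> H; apply/ffunP => t; rewrite -!at3_chain.
by case/andP: (valP t) => h1 h2; apply: H.
Qed.

Lemma at3_e a b c x y z :
  at3 (e3 R a b c) x y z =
  ((x == a) && (y == b) && (z == c) && ((a <= b)%O && (b <= c)%O))%:R.
Proof.
have -> : (x == a) && (y == b) && (z == c) = ((x,y,z) == (a,b,c)) by [].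
rewrite /at3 /e3; case: insubP => [t Ht Ev|Hn].
  rewrite ffunE Ev; rewrite /is_chain3 /= in Ht.
  case: eqP => [[ex ey ez]|ne] //; by subst; rewrite Ht.
rewrite /is_chain3 /= in Hn.
case: eqP => [[ex ey ez]|ne] //; by subst; rewrite (negbTE Hn).
Qed.

Lemma at3_mul f g x1 x2 x3 :
  at3 (mul3 f g) x1 x2 x3 =
  ((x1 <= x2)%O && (x2 <= x3)%O)%:R *
  \sum_(p : P * P | [&& (x1 <= p.1)%O, (p.1 <= x2)%O, (x2 <= p.2)%O & (p.2 <= x3)%O])
     at3 f x1 p.1 p.2 * at3 g p.1 p.2 x3.
Proof.
rewrite {1}/at3; case: insubP => [t Ht Ev|Hn].
  rewrite /is_chain3 /= in Ht.
  by rewrite /mul3 ffunE /= Ev /= Ht mul1r pair_big_dep.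
by rewrite /is_chain3 /= in Hn; rewrite (negbTE Hn) mul0r.
Qed.

Lemma natb3A (b1 b2 b3 : bool) (X : R) :
  b1%:R * (b2%:R * (X * b3%:R)) = (b1 && b2 && b3)%:R * X.
Proof. by case: b1; case: b2; case: b3; rewrite ?mul1r ?mul0r ?mulr1 ?mulr0. Qed.

Lemma natb3B (b1 b2 b3 : bool) (X : R) :
  b1%:R * (b2%:R * (b3%:R * X)) = (b1 && b2 && b3)%:R * X.
Proof. by case: b1; case: b2; case: b3; rewrite ?mul1r ?mul0r ?mulr1 ?mulr0. Qed.

Lemma mul_eR f b c k x1 x2 x3 :
  at3 (mul3 f (e3 R b c k)) x1 x2 x3 =
  ([&& x3 == k, (c <= k)%O, (b <= x2)%O & (x2 <= c)%O])%:R * at3 f x1 b c.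
Proof.
rewrite at3_mul (@sum_one _ _ _ _ (b,c)); last first.
  move=> [y1 y2] /= _; rewrite xpair_eqE; case/nandP => /negbTE ne;
  by rewrite at3_e ne ?andbF ?andFb /= mulr0.
rewrite /= at3_e !eqxx /= natb3A.
case h1: (x1 <= b)%O; last by rewrite (at3_nchain f) ?h1 // !mulr0.
congr ((nat_of_bool _)%:R * _); apply/idP/idP.
  by case/andP=> [/andP[_ /and4P[_ -> -> _]] /andP[-> /andP[_ ->]]].
case/and4P => /eqP -> ck bx xc.
by rewrite (le_trans h1 bx) (le_trans xc ck) bx xc ck eqxx (le_trans bx xc).
Qed.

Lemma mul_eL a b c g x1 x2 x3 :
  at3 (mul3 (e3 R a b c) g) x1 x2 x3 =
  ([&& x1 == a, (a <= b)%O, (b <= x2)%O & (x2 <= c)%O])%:R * at3 g b c x3.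
Proof.
rewrite at3_mul (@sum_one _ _ _ _ (b,c)); last first.
  move=> [y1 y2] /= _; rewrite xpair_eqE; case/nandP => /negbTE ne;
  by rewrite at3_e ne ?andbF ?andFb /= mul0r.
rewrite /= at3_e !eqxx /= natb3B.
case h3: (c <= x3)%O; last by rewrite (at3_nchain g) ?h3 ?andbF // !mulr0.
congr ((nat_of_bool _)%:R * _); apply/idP/idP.
  by rewrite !andbT => /and4P[/and4P[_ _ -> ->] -> -> _].
case/and4P => /eqP -> ab bx xc.
by rewrite (le_trans ab bx) (le_trans xc h3) ab bx xc eqxx (le_trans bx xc).
Qed.

Lemma mul_ediagR f z x1 x2 x3 :
  at3 (mul3 f (e3 R z z z)) x1 x2 x3 = ((x3 == z) && (x2 == z))%:R * at3 f x1 z z.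
Proof.
have E : ((z <= x2)%O && (x2 <= z)%O) = (x2 == z) by rewrite eq_le andbC.
by rewrite mul_eR lexx /= E.
Qed.

Lemma mul_ediagL z g x1 x2 x3 :
  at3 (mul3 (e3 R z z z) g) x1 x2 x3 = ((x1 == z) && (x2 == z))%:R * at3 g z z x3.
Proof.
have E : ((z <= x2)%O && (x2 <= z)%O) = (x2 == z) by rewrite eq_le andbC.
by rewrite mul_eL lexx /= E.
Qed.

Lemma at3_ediag z x1 x2 x3 :
  at3 (e3 R z z z) x1 x2 x3 = ((x1 == z) && (x2 == z) && (x3 == z))%:R.
Proof. by rewrite at3_e lexx !andbT. Qed.

End Basic.


Section SLemma.
Variables (d : Order.disp_t) (P : finPOrderType d) (R : comNzRingType).
Local Notation A := (I3 P R).
Implicit Types (f g v w : A) (x y z a b c : P).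

Definition isS v := forall g, mul3 v (mul3 v g) = mul3 v g /\ mul3 (mul3 g v) v = mul3 g v.

Lemma nle_of x y : (x <= y)%O -> y != x -> ~~ (y <= x)%O.
Proof. move=> h ne; apply/negP => h'; by move: ne; rewrite (@le_anti _ _ x y) ?h ?h' ?eqxx. Qed.
Arguments nle_of {x y}.

Lemma V0l v x y z : ~~ (x <= y)%O -> at3 v x y z = 0.
Proof. by move=> h; rewrite at3_nchain // (negbTE h). Qed.
Arguments V0l {v x y z}.

Lemma V0r v x y z : ~~ (y <= z)%O -> at3 v x y z = 0.
Proof. by move=> h; rewrite at3_nchain // (negbTE h) andbF. Qed.
Arguments V0r {v x y z}.

Variables (v : A) (HS : isS v) (a c : P) (ac : (a < c)%O).
Hypothesis IH : forall a' c', (a <= a')%O -> (c' <= c)%O -> (a' < c')%O ->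
   (a' != a) || (c' != c) -> forall b', at3 v a' b' c' = 0.

Local Notation V := (at3 v).

Let le_ac : (a <= c)%O. Proof. exact: ltW. Qed.
Let ne_ca : c != a. Proof. by move: ac; rewrite lt_def => /andP[]. Qed.
Let ne_ac : a != c. Proof. by rewrite eq_sym. Qed.

Lemma HL g x y z : at3 (mul3 v (mul3 v g)) x y z = at3 (mul3 v g) x y z.
Proof. by case: (HS g) => ->. Qed.
Lemma HR g x y z : at3 (mul3 (mul3 g v) v) x y z = at3 (mul3 g v) x y z.
Proof. by case: (HS g) => _ ->. Qed.

Let p := V a a c.
Let q := V a c c.
Let al := V a a a.
Let ga := V c c c.

Lemma eq_i : p * p = p.
Proof.
have := HL (e3 R a c c) a c c.
rewrite at3_mul (@sum_one _ _ _ _ (a,c)); last first.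
  move=> [y1 y2] /= /and4P[h1 h2 h3 h4] ne.
  have e2 : y2 = c by apply/le_anti; rewrite h3 h4.
  subst y2; rewrite xpair_eqE eqxx andbT in ne.
  by rewrite mul_eR (V0l (nle_of h1 ne)) !mulr0.
by rewrite /= !mul_eR !lexx le_ac !eqxx /= !mul1r.
Qed.

Lemma eq_ii : q * q = q.
Proof.
have := HR (e3 R a a c) a a c.
rewrite at3_mul (@sum_one _ _ _ _ (a,c)); last first.
  move=> [y1 y2] /= /and4P[h1 h2 h3 h4] ne.
  have e1 : y1 = a by apply/le_anti; rewrite h1 h2.
  subst y1; rewrite xpair_eqE eqxx /= in ne.
  by rewrite eq_sym in ne; rewrite mul_eL (V0r (nle_of h4 ne)) !mulr0 mul0r.
by rewrite /= !mul_eL !lexx le_ac !eqxx /= !mul1r.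
Qed.

Lemma eq_iii : p * q = 0.
Proof.
have := HL (e3 R c c c) a a c.
rewrite at3_mul (@sum_one _ _ _ _ (a,c)); last first.
  move=> [y1 y2] /= /and4P[h1 h2 h3 h4] ne.
  have e1 : y1 = a by apply/le_anti; rewrite h1 h2.
  subst y1; rewrite xpair_eqE eqxx /= in ne.
  by rewrite mul_ediagR (negbTE ne) andbF mul0r mulr0.
by rewrite /= !mul_ediagR !lexx le_ac !eqxx (negbTE ne_ac) /= !mul1r mul0r.
Qed.

Lemma eq_iv : al * p + p * p = p.
Proof.
have := HL (e3 R a c c) a a c.
rewrite at3_mul (@sum_two _ _ _ _ (a,a) (a,c)); first last.
- move=> [y1 y2] /= /and4P[h1 h2 h3 h4] ne1 ne2.
  have e1 : y1 = a by apply/le_anti; rewrite h1 h2.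
  subst y1; rewrite xpair_eqE eqxx /= in ne1; rewrite xpair_eqE eqxx /= in ne2.
  rewrite (IH _ _ (lexx a) h4) ?mul0r //; last by rewrite ne2 orbT.
  by rewrite lt_def ne1.
- by rewrite xpair_eqE eqxx /= eq_sym ne_ca.
by rewrite /= !mul_eR !lexx le_ac !eqxx /= !mul1r.
Qed.

Lemma eq_v : al * p + p * q = p.
Proof.
have := HR (e3 R a a a) a a c.
rewrite at3_mul (@sum_two _ _ _ _ (a,a) (a,c)); first last.
- move=> [y1 y2] /= /and4P[h1 h2 h3 h4] ne1 ne2.
  have e1 : y1 = a by apply/le_anti; rewrite h1 h2.
  subst y1; rewrite xpair_eqE eqxx /= in ne1; rewrite xpair_eqE eqxx /= in ne2.
  rewrite mul_ediagL (IH _ _ (lexx a) h4) ?mulr0 ?mul0r //; last by rewrite ne2 orbT.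
  by rewrite lt_def ne1.
- by rewrite xpair_eqE eqxx /= eq_sym ne_ca.
by rewrite /= !mul_ediagL !lexx le_ac !eqxx /= !mul1r.
Qed.

Lemma eq_vi : p * q + q * ga = q.
Proof.
have := HL (e3 R c c c) a c c.
rewrite at3_mul (@sum_two _ _ _ _ (a,c) (c,c)); first last.
- move=> [y1 y2] /= /and4P[h1 h2 h3 h4] ne1 ne2.
  have e2 : y2 = c by apply/le_anti; rewrite h3 h4.
  subst y2; rewrite xpair_eqE eqxx andbT in ne1; rewrite xpair_eqE eqxx andbT in ne2.
  rewrite mul_ediagR (IH _ _ h1 (lexx c)) ?mulr0 //; last by rewrite ne1.
  by rewrite lt_def eq_sym ne2.
- by rewrite xpair_eqE eqxx andbT ne_ac.
by rewrite /= !mul_ediagR !lexx le_ac !eqxx /= !mul1r.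
Qed.

Lemma eq_vii : q * q + q * ga = q.
Proof.
have := HR (e3 R a a c) a c c.
rewrite at3_mul (@sum_two _ _ _ _ (a,c) (c,c)); first last.
- move=> [y1 y2] /= /and4P[h1 h2 h3 h4] ne1 ne2.
  have e2 : y2 = c by apply/le_anti; rewrite h3 h4.
  subst y2; rewrite xpair_eqE eqxx andbT in ne1; rewrite xpair_eqE eqxx andbT in ne2.
  rewrite (IH _ _ h1 (lexx c)) ?mulr0 //; last by rewrite ne1.
  by rewrite lt_def eq_sym ne2.
- by rewrite xpair_eqE eqxx andbT ne_ac.
by rewrite /= !mul_eL !lexx le_ac !eqxx /= !mul1r.
Qed.

Lemma p0 : p = 0.
Proof.
have h1 : al * p = 0.
  by have := eq_iv; rewrite eq_i -{3}[p]add0r => /addIr.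
have h2 : al * p = p by have := eq_v; rewrite eq_iii addr0.
by rewrite -h2 h1.
Qed.

Lemma q0 : q = 0.
Proof.
have h1 : q * ga = q by have := eq_vi; rewrite eq_iii add0r.
have h2 : q * q = 0 by have := eq_vii; rewrite h1 -{4}[q]add0r => /addIr.
by rewrite -eq_ii h2.
Qed.

Lemma p0' : V a a c = 0. Proof. exact: p0. Qed.

Lemma step b : V a b c = 0.
Proof.
case: (b =P a) => [->|nba]; first exact: p0.
case: (b =P c) => [->|nbc]; first exact: q0.
case ab: (a <= b)%O; last by rewrite V0l ?ab.
case bc: (b <= c)%O; last by rewrite V0r ?bc.
have := HL (e3 R b c c) a b c.
rewrite at3_mul big1.
  by rewrite mulr0 mul_eR !lexx bc !eqxx /= mul1r.
move=> [y1 y2] /= /and4P[h1 h2 h3 h4].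
rewrite mul_eR.
case: (y1 =P a) => [ey1|ne1].
  subst y1.
  case: (y2 =P c) => [ey2|ne2].
    by subst y2; rewrite p0' mul0r.
  rewrite (IH _ _ (lexx a) h4) ?mul0r //; last by rewrite (introN eqP ne2) orbT.
  rewrite lt_def (le_trans h2 h3) andbT.
  apply/eqP => e; subst y2.
  by apply: nba; apply/le_anti; rewrite ab h3.
rewrite (IH _ _ h1 (lexx c)) ?mulr0 //; last by rewrite (introN eqP ne1).
rewrite lt_def (le_trans h2 bc) andbT.
apply/eqP => e; subst y1.
by apply: nbc; apply/le_anti; rewrite h2 bc.
Qed.

End SLemma.


Section Atoms.
Variables (d : Order.disp_t) (P : finPOrderType d) (R : comNzRingType).
Hypothesis Rind : indecomposable R.
Local Notation A := (I3 P R).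
Local Notation isS := (isS d P R).
Implicit Types (f g v w : A) (x y z a b c : P).

Lemma S_offdiag v : isS v -> forall a c, (a < c)%O -> forall b, at3 v a b c = 0.
Proof.
move=> HS.
pose itv a c := [pred t : P | (a <= t)%O && (t <= c)%O].
suff H : forall n a c, (#|itv a c| < n)%N -> (a < c)%O -> forall b, at3 v a b c = 0.
  by move=> a c; apply: (H #|itv a c|.+1).
elim=> // n IHn a c hn ac.
apply: (@step _ _ _ _ HS _ _ ac) => a' c' h1 h2 h3 h4 b'.
apply: (IHn a' c') => //.
apply: (leq_trans _ (hn : (#|itv a c| <= n)%N)).
apply: proper_card; apply/properP; split.
  apply/subsetP => t; rewrite !inE => /andP[t1 t2].
  by rewrite (le_trans h1 t1) (le_trans t2 h2).
have le_ac : (a <= c)%O by exact: ltW.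
case/orP: h4 => [na|nc].
  exists a; first by rewrite inE lexx le_ac.
  rewrite inE; apply/negP => /andP[h5 _].
  by move: na; rewrite (@le_anti _ _ a' a) ?h1 ?h5 ?eqxx.
exists c; first by rewrite inE lexx le_ac.
rewrite inE; apply/negP => /andP[_ h5].
by move: nc; rewrite (@le_anti _ _ c' c) ?h2 ?h5 ?eqxx.
Qed.

Lemma S_idem v : isS v -> forall x, at3 v x x x * at3 v x x x = at3 v x x x.
Proof.
move=> HS x; have := @HL _ _ _ _ HS (e3 R x x x) x x x.
rewrite at3_mul (@sum_one _ _ _ _ (x,x)); last first.
  move=> [y1 y2] /= /and4P[h1 h2 h3 h4] ne.
  have e1 : y1 = x by apply/le_anti; rewrite h1 h2.
  have e2 : y2 = x by apply/le_anti; rewrite h3 h4.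
  by subst; rewrite eqxx in ne.
by rewrite /= !mul_ediagR !lexx !eqxx /= !mul1r.
Qed.

Lemma S_form v : isS v -> forall a b c,
  at3 v a b c = ((a == b) && (b == c))%:R * at3 v a a a.
Proof.
move=> HS a b c.
case ch: ((a <= b)%O && (b <= c)%O); last first.
  rewrite at3_nchain ?ch //.
  case: (a =P b) ch => [->|_] /=; last by rewrite mul0r.
  case: (b =P c) => [->|_] /=; last by rewrite mul0r.
  by rewrite lexx.
case/andP: ch => ab bc.
case: (a =P c) => [eac|nac].
  subst c.
  have eab : a = b by apply/le_anti; rewrite ab bc.
  by subst b; rewrite eqxx mul1r.
rewrite (S_offdiag _ HS) ?lt_def ?(le_trans ab bc) ?andbT; last by apply/eqP => e; apply: nac.
case: (a =P b) => [eab|_] /=; last by rewrite mul0r.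
case: (b =P c) => [ebc|_] /=; last by rewrite mul0r.
by subst; case: nac.
Qed.

Lemma idem01 (r : R) : r * r = r -> r = 0 \/ r = 1.
Proof. exact: Rind. Qed.

Lemma at3_0 x y z : at3 (0 : A) x y z = 0.
Proof. by rewrite /at3; case: insubP => // t _ _; rewrite ffunE. Qed.

Lemma e_isS x : isS (e3 R x x x).
Proof.
move=> g; split; apply: eq_I3 => a b c _ _.
  by rewrite !mul_ediagL !eqxx mul1r.
by rewrite !mul_ediagR !eqxx mul1r.
Qed.

Lemma e_neq0 a b c : (a <= b)%O -> (b <= c)%O -> e3 R a b c <> 0.
Proof.
move=> ab bc e; have := @at3_e _ _ R a b c a b c.
by rewrite e at3_0 !eqxx ab bc /= => /eqP; rewrite eq_sym oner_eq0.
Qed.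

Definition atom v := isS v /\ v <> 0 /\ forall w, isS w -> mul3 w v = 0 \/ mul3 w v = v.

Lemma e_atom x : atom (e3 R x x x).
Proof.
split; first exact: e_isS.
split; first by apply: e_neq0; rewrite lexx.
move=> w HS.
case: (idem01 _ (S_idem _ HS x)) => [h0|h1]; [left|right]; apply: eq_I3 => a b c _ _.
  rewrite mul_ediagR (S_form _ HS) at3_0.
  case: (a =P x) => [->|/eqP na]; first by rewrite h0 !mulr0.
  by rewrite /= mul0r mulr0.
rewrite mul_ediagR (S_form _ HS) at3_ediag.
case: (a =P x) => [->|/eqP na] /=.
  by rewrite h1 eqxx mulr1; case: (c == x); case: (b == x); rewrite ?mulr1 ?mul0r.
by rewrite mul0r mulr0.
Qed.

Lemma atom_e v : atom v -> exists x, v = e3 R x x x.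
Proof.
move=> [HS [nz Hw]].
case: (pickP (fun x => at3 v x x x != 0)) => [x hx|h]; last first.
  exfalso; apply: nz; apply: eq_I3 => a b c _ _; rewrite at3_0 (S_form _ HS).
  by move/negbFE/eqP: (h a) => ->; rewrite mulr0.
have h1 : at3 v x x x = 1.
  by case: (idem01 _ (S_idem _ HS x)) => // h0; rewrite h0 eqxx in hx.
exists x.
have E : mul3 (e3 R x x x) v = e3 R x x x.
  apply: eq_I3 => a b c _ _; rewrite mul_ediagL (S_form _ HS) at3_ediag h1 eqxx /= mulr1.
  rewrite [x == c]eq_sym; case: (a == x); case: (b == x); case: (c == x);
  by rewrite ?mulr1 ?mul1r ?mul0r ?mulr0.
case: (Hw _ (e_isS x)) => [E0|Ev]; last by rewrite -Ev E.
by exfalso; apply: (e_neq0 x x x (lexx x) (lexx x)); rewrite -E E0.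
Qed.

End Atoms.


Ltac bcase := repeat match goal with |- context [(?x == ?y)] => case: (x == y) end;
  rewrite /= ?andbT ?mulr1 ?mul1r ?mul0r ?mulr0 //.

Section Comp.
Variables (d : Order.disp_t) (P : finPOrderType d) (R : comNzRingType).
Local Notation A := (I3 P R).
Implicit Types (f g v w : A) (x y z a b c : P).

Lemma P1 x c : (x <= c)%O -> mul3 (e3 R x x x) (e3 R x x c) = e3 R x x c.
Proof.
move=> xc; apply: eq_I3 => a1 a2 a3 _ _.
rewrite mul_ediagL !at3_e !eqxx !lexx xc /=; bcase.
Qed.

Lemma P2 x c : (x <= c)%O -> mul3 (e3 R x c c) (e3 R c c c) = e3 R x c c.
Proof.
move=> xc; apply: eq_I3 => a1 a2 a3 _ _.
rewrite mul_ediagR !at3_e !eqxx !lexx xc /=; bcase.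
Qed.

Lemma P3 x c : (x <= c)%O ->
  mul3 (e3 R x x x) (mul3 (e3 R x x c) (e3 R x c c)) = e3 R x x c.
Proof.
move=> xc; apply: eq_I3 => a1 a2 a3 _ _.
rewrite mul_ediagL mul_eR !at3_e !eqxx !lexx xc /=; bcase.
Qed.

Lemma P4 x c : (x <= c)%O ->
  mul3 (mul3 (e3 R x x c) (e3 R x c c)) (e3 R c c c) = e3 R x c c.
Proof.
move=> xc; apply: eq_I3 => a1 a2 a3 _ _.
rewrite mul_ediagR mul_eR !at3_e !eqxx !lexx xc /=; bcase.
Qed.

Lemma P5 a b c : (a <= b)%O -> (b <= c)%O ->
  mul3 (e3 R a b b) (e3 R b b c) = e3 R a b c.
Proof.
move=> ab bc; apply: eq_I3 => x1 x2 x3 _ _.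
have E : ((b <= x2)%O && (x2 <= b)%O) = (x2 == b) by rewrite eq_le andbC.
rewrite mul_eR !at3_e E !eqxx !lexx ab bc /=; bcase.
Qed.

Lemma Q1 F E y z :
  (forall a b c, at3 E a b c = ((c == z) && (b == z))%:R * at3 E a z z) ->
  forall a1 a2 a3, at3 (mul3 (e3 R y y y) (mul3 F E)) a1 a2 a3 =
    (at3 F y y z * at3 E y z z) * at3 (e3 R y y z) a1 a2 a3.
Proof.
move=> hE a1 a2 a3.
rewrite mul_ediagL at3_mul.
under eq_bigr do rewrite hE.
rewrite (@sum_one _ _ _ _ (y,z)); last first.
  move=> [y1 y2] /= /and4P[h1 h2 h3 h4] ne.
  have e1 : y1 = y by apply/le_anti; rewrite h1 h2.
  subst y1; rewrite xpair_eqE eqxx /= in ne.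
  by rewrite (negbTE ne) andbF /= mul0r mulr0.
rewrite /= at3_e !eqxx !lexx /=.
case: (a3 =P z) => [->|_] /=; last by rewrite !andbF /= !mul0r !mulr0.
case yz: (y <= z)%O => /=; last by rewrite !andbF /= !mul0r !mulr0.
rewrite ?lexx; bcase.
Qed.

Lemma Q2 F E y z :
  (forall a b c, at3 F a b c = ((a == y) && (b == y))%:R * at3 F y y c) ->
  forall a1 a2 a3, at3 (mul3 (mul3 F E) (e3 R z z z)) a1 a2 a3 =
    (at3 F y y z * at3 E y z z) * at3 (e3 R y z z) a1 a2 a3.
Proof.
move=> hF a1 a2 a3.
rewrite mul_ediagR at3_mul.
under eq_bigr do rewrite hF.
rewrite (@sum_one _ _ _ _ (y,z)); last first.
  move=> [y1 y2] /= /and4P[h1 h2 h3 h4] ne.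
  have e2 : y2 = z by apply/le_anti; rewrite h3 h4.
  subst y2; rewrite xpair_eqE eqxx andbT in ne.
  by rewrite (negbTE ne) andbF /= !mul0r.
rewrite /= at3_e !eqxx !lexx /=.
case: (a1 =P y) => [->|_] /=; last by rewrite /= !mul0r !mulr0.
case yz: (y <= z)%O => /=; last by rewrite !andbF /= !mul0r !mulr0.
rewrite ?lexx; bcase.
Qed.

End Comp.


Section Transport.
Variables (dP dQ : Order.disp_t) (P : finPOrderType dP) (Q : finPOrderType dQ)
  (R : comNzRingType).
Hypothesis Rind : indecomposable R.
Variable F : I3 P R -> I3 Q R.
Hypothesis Fm : forall f g, F (mul3 f g) = mul3 (F f) (F g).
Hypothesis Finj : injective F.
Hypothesis F0 : F 0 = 0.

Lemma Fne0 f : f <> 0 -> F f <> 0.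
Proof. by move=> nz e; apply: nz; apply: Finj; rewrite e F0. Qed.

Lemma isS_Fr v : isS _ _ _ (F v) -> isS _ _ _ v.
Proof.
move=> HS g; split; apply: Finj; rewrite !Fm; by case: (HS (F g)).
Qed.

Lemma isS_F (Fsurj : forall h, exists f, F f = h) v : isS _ _ _ v -> isS _ _ _ (F v).
Proof.
move=> HS h; case: (Fsurj h) => g <-; rewrite -!Fm.
by case: (HS g) => -> ->.
Qed.

Lemma atom_F (Fsurj : forall h, exists f, F f = h) v : atom _ _ _ v -> atom _ _ _ (F v).
Proof.
move=> [HS [nz Hw]]; split; first exact: isS_F.
split; first exact: Fne0.
move=> w' HSw; case: (Fsurj w') => w ew; subst w'.
case: (Hw w (isS_Fr _ HSw)) => e; [left|right]; by rewrite -Fm e.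
Qed.

Variable tau : P -> Q.
Hypothesis Fe : forall x, F (e3 R x x x) = e3 R (tau x) (tau x) (tau x).

Lemma scal x c : (x <= c)%O ->
  [/\ (tau x <= tau c)%O, F (e3 R x x c) = e3 R (tau x) (tau x) (tau c)
    & F (e3 R x c c) = e3 R (tau x) (tau c) (tau c)].
Proof.
move=> xc.
have hFx : F (e3 R x x c) = mul3 (e3 R (tau x) (tau x) (tau x)) (F (e3 R x x c)).
  by rewrite -Fe -Fm P1.
have hEx : F (e3 R x c c) = mul3 (F (e3 R x c c)) (e3 R (tau c) (tau c) (tau c)).
  by rewrite -Fe -Fm P2.
have eqF : F (e3 R x x c) =
    mul3 (e3 R (tau x) (tau x) (tau x)) (mul3 (F (e3 R x x c)) (F (e3 R x c c))).
  by rewrite -Fe -!Fm P3.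
have eqE : F (e3 R x c c) =
    mul3 (mul3 (F (e3 R x x c)) (F (e3 R x c c))) (e3 R (tau c) (tau c) (tau c)).
  by rewrite -Fe -!Fm P4.
have hF : forall a b c', at3 (F (e3 R x x c)) a b c' =
    ((a == tau x) && (b == tau x))%:R * at3 (F (e3 R x x c)) (tau x) (tau x) c'.
  by move=> a b c'; rewrite {1}hFx mul_ediagL.
have hE : forall a b c', at3 (F (e3 R x c c)) a b c' =
    ((c' == tau c) && (b == tau c))%:R * at3 (F (e3 R x c c)) a (tau c) (tau c).
  by move=> a b c'; rewrite {1}hEx mul_ediagR.
set l := at3 (F (e3 R x x c)) (tau x) (tau x) (tau c) *
         at3 (F (e3 R x c c)) (tau x) (tau c) (tau c).
have hFl : forall a b c', at3 (F (e3 R x x c)) a b c' =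
    l * at3 (e3 R (tau x) (tau x) (tau c)) a b c'.
  by move=> a b c'; rewrite {1}eqF (Q1 _ _ _ _ _ _ (tau c) hE).
have hEl : forall a b c', at3 (F (e3 R x c c)) a b c' =
    l * at3 (e3 R (tau x) (tau c) (tau c)) a b c'.
  by move=> a b c'; rewrite {1}eqE (Q2 _ _ _ _ _ (tau x) (tau c) hF).
have nzF : F (e3 R x x c) <> 0 by apply: Fne0; apply: e_neq0; rewrite ?lexx.
have nzE : F (e3 R x c c) <> 0 by apply: Fne0; apply: e_neq0; rewrite ?lexx.
have yz : (tau x <= tau c)%O.
  apply/negPn/negP => nyz; apply: nzF; apply: eq_I3 => a b c' _ _.
  by rewrite hFl at3_e (negbTE nyz) !andbF /= mulr0 at3_0.
have ll : l * l = l.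
  by rewrite {3}/l hFl hEl !at3_e !eqxx !lexx yz /= !mulr1.
have l1 : l = 1.
  case: (Rind _ ll) => // l0; exfalso; apply: nzF; apply: eq_I3 => a b c' _ _.
  by rewrite hFl l0 mul0r at3_0.
split=> //; apply: eq_I3 => a b c' _ _; by rewrite ?hFl ?hEl l1 mul1r.
Qed.

Lemma mono a b c : (a <= b)%O -> (b <= c)%O ->
  F (e3 R a b c) = e3 R (tau a) (tau b) (tau c).
Proof.
move=> ab bc.
case: (scal _ _ ab) => ab' _ E1; case: (scal _ _ bc) => bc' E2 _.
by rewrite -(P5 _ _ _ _ _ _ ab bc) Fm E1 E2 (P5 _ _ _ _ _ _ ab' bc').
Qed.

End Transport.


Lemma e_inj (dd : Order.disp_t) (T : finPOrderType dd) (R : comNzRingType) (x y : T) :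
  e3 R x x x = e3 R y y y -> x = y.
Proof.
move=> e; move: (congr1 (fun f => at3 f x x x) e) => /=.
rewrite !at3_ediag !eqxx /=.
case: (x =P y) => // _ /=; move/eqP; by rewrite oner_eq0.
Qed.

Theorem theorem3p19 (dP dQ : Order.disp_t) (P : finPOrderType dP)
  (Q : finPOrderType dQ) (R : comNzRingType) :
  indecomposable R ->
  forall Phi : {linear I3 P R -> I3 Q R},
    bijective Phi ->
    (forall f g : I3 P R, Phi (mul3 f g) = mul3 (Phi f) (Phi g)) ->
    exists phi : P -> Q,
      poset_iso phi /\
      (forall x y z : P, (x <= y)%O -> (y <= z)%O ->
         Phi (e3 R x y z) = e3 R (phi x) (phi y) (phi z)).
Proof.
move=> Rind Phi [G PG GP] Pm.
have F0 : Phi 0 = 0 := raddf0 Phi.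
have Finj : injective Phi := can_inj PG.
have Fsurj : forall h, exists f, Phi f = h by move=> h; exists (G h).
have Gm : forall f g, G (mul3 f g) = mul3 (G f) (G g).
  by move=> f g; apply: Finj; rewrite Pm !GP.
have Ginj : injective G := can_inj GP.
have G0 : G 0 = 0 by rewrite -F0 PG.
have Gsurj : forall h, exists f, G f = h by move=> h; exists (Phi h).
have hs : forall x, exists y, Phi (e3 R x x x) = e3 R y y y.
  move=> x; apply: (atom_e _ _ _ Rind); apply: (@atom_F _ _ _ _ _ _ Pm Finj F0 Fsurj).
  exact: e_atom.
have ht : forall y, exists x, G (e3 R y y y) = e3 R x x x.
  move=> y; apply: (atom_e _ _ _ Rind); apply: (@atom_F _ _ _ _ _ _ Gm Ginj G0 Gsurj).
  exact: e_atom.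
case: (fin_all_exists hs) => sigma Hs.
case: (fin_all_exists ht) => tau Ht.
have st : forall y, sigma (tau y) = y.
  by move=> y; apply: (@e_inj _ _ R); rewrite -Hs -Ht GP.
have ts : forall x, tau (sigma x) = x.
  by move=> x; apply: (@e_inj _ _ R); rewrite -Ht -Hs PG.
exists sigma; split.
  split; first by exists tau.
  move=> x y; apply/idP/idP => h.
    case: (@scal _ _ _ _ _ Rind _ Gm Ginj G0 _ Ht _ _ h) => + _ _.
    by rewrite !ts.
  by case: (@scal _ _ _ _ _ Rind _ Pm Finj F0 _ Hs _ _ h).
move=> x y z xy yz; exact: (@mono _ _ _ _ _ Rind _ Pm Finj F0 _ Hs _ _ _ xy yz).
Qed.
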